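(* Let $M_{\mathbf a}$ be a Brieskorn manifold of dimension $5$ or $7$ (i.e. $n=3$ or $n=4$) with all exponents $a_j\ge 2$, whose natural Sasakian structure is regular and positive. Then, up to reordering of the coordinates, (1) if $n=3$: $\mathbf a\in\{(2,2,2,2),(3,3,3,3),(4,4,4,2),(6,6,3,2)\}$; (2) if $n=4$: $\mathbf a\in\{(2,2,2,2,2),(3,3,3,3,3),(4,4,4,4,4),(4,4,4,4,2),(6,6,6,6,2),(6,6,6,3,2)\}$.
   Context: For a degree $d$, weight vector $\mathbf w=(w_0,\dots,w_n)\in(\mathbb Z^+)^{n+1}$ and exponents $a_i=d/w_i\in\mathbb Z^+$, the Brieskorn–Pham polynomial is $f_{\mathbf a}(\mathbf z)=z_0^{a_0}+\dots+z_n^{a_n}$ and the Brieskorn manifold is $M_{\mathbf a}=\{f_{\mathbf a}=0\}\cap S^{2n+1}\subset\mathbb C^{n+1}$, of dimension $2n-1$. It carries a natural Sasakian structure whose Reeb field generates the weighted circle action $\lambda\cdot\mathbf z=(\lambda^{w_0}z_0,\dots,\lambda^{w_n}z_n)$. This structure is regular if and only if the weights $w_j$ are pairwise relatively prime, and it is positive if and only if $|\mathbf w|-d>0$, where $|\mathbf w|=\sum_jw_j$. *)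

(* Defs.v *)
From mathcomp Require Import all_boot.
Set Implicit Arguments. Unset Strict Implicit. Unset Printing Implicit Defensive.

(* Brieskorn data: degree d, weights w : 'I_n.+1 -> nat, exponents a_i = d / w_i. *)
Definition bp_data (n d : nat) (w : 'I_n.+1 -> nat) : Prop :=
  0 < d /\ (forall i, 0 < w i) /\ (forall i, w i %| d).

Definition exponent (n d : nat) (w : 'I_n.+1 -> nat) (i : 'I_n.+1) : nat :=
  d %/ w i.

Definition exponents (n d : nat) (w : 'I_n.+1 -> nat) : seq nat :=
  [seq exponent d w i | i <- enum 'I_n.+1].

(* The natural Sasakian structure is regular iff the weights are pairwise coprime. *)
Definition regular (n : nat) (w : 'I_n.+1 -> nat) : Prop :=
  forall i j : 'I_n.+1, i != j -> coprime (w i) (w j).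

(* ... and positive iff |w| - d > 0. *)
Definition positive (n d : nat) (w : 'I_n.+1 -> nat) : Prop :=
  d < \sum_(i < n.+1) w i.

Definition list_n3 : seq (seq nat) :=
  [:: [:: 2; 2; 2; 2]; [:: 3; 3; 3; 3]; [:: 4; 4; 4; 2]; [:: 6; 6; 3; 2]].

Definition list_n4 : seq (seq nat) :=
  [:: [:: 2; 2; 2; 2; 2]; [:: 3; 3; 3; 3; 3]; [:: 4; 4; 4; 4; 4];
      [:: 4; 4; 4; 4; 2]; [:: 6; 6; 6; 6; 2]; [:: 6; 6; 6; 3; 2]].

(* Main.v *)
Require Import Defs.
From mathcomp Require Import all_boot.
From mathcomp Require Import zify.

Lemma enum4 : enum 'I_4 = [:: inord 0; inord 1; inord 2; inord 3].
Proof. by apply: (inj_map val_inj); rewrite val_enum_ord /= !inordK. Qed.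
Lemma sum4 (w : 'I_4 -> nat) : \sum_(i < 4) w i = w (inord 0) + w (inord 1) + w (inord 2) + w (inord 3).
Proof. by rewrite -big_enum /= enum4 !big_cons big_nil addn0 !addnA. Qed.
Lemma enum5 : enum 'I_5 = [:: inord 0; inord 1; inord 2; inord 3; inord 4].
Proof. by apply: (inj_map val_inj); rewrite val_enum_ord /= !inordK. Qed.
Lemma sum5 (w : 'I_5 -> nat) : \sum_(i < 5) w i = w (inord 0) + w (inord 1) + w (inord 2) + w (inord 3) + w (inord 4).
Proof. by rewrite -big_enum /= enum5 !big_cons big_nil addn0 !addnA. Qed.

Lemma bnd {d a rest k : nat} : 0 < d -> a %| d -> 2 <= d %/ a -> a * rest <= k * d -> d < a + rest -> a < 2*k.
Proof.
move=> d0 ad; rewrite leq_divRL; last by case: a ad => //; rewrite dvd0n => /eqP E; rewrite E in d0.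
move=> h2 hr hs.
rewrite ltnNge; apply/negP => hk.
have h1 : a * d.+1 <= a * (a + rest) by rewrite leq_mul2l hs orbT.
have h3 : a * (2 * a) <= a * d by rewrite leq_mul2l h2 orbT.
have h4 : 2 * k * d <= a * d by rewrite leq_mul2r hk orbT.
nia.
Qed.

Lemma pairb {d a b : nat} : 0 < d -> a %| d -> b %| d -> coprime a b -> a * b <= d.
Proof. by move=> d0 ad bd cab; apply: dvdn_leq => //; rewrite Gauss_dvd // ad bd. Qed.

Definition ds d := [seq x <- iota 0 8 | [&& 0 < x, x %| d & 2 <= d %/ x]].

Lemma in_ds {d x : nat} : 0 < d -> x %| d -> 2 <= d %/ x -> x < 8 -> x \in ds d.
Proof.
move=> d0 xd x2 x8; rewrite mem_filter mem_iota xd x2 /= x8 andbT.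
by case: x xd x2 {x8} => //; rewrite dvd0n => /eqP E; rewrite E in d0.
Qed.

Definition chk4 := all (fun d => all (fun a => all (fun b => all (fun c => all (fun e => all (fun f =>
  [&& coprime a b, coprime a c, coprime a e, coprime a f, coprime b c, coprime b e, coprime b f,
      coprime c e, coprime c f, coprime e f & d < a + b + c + e + f]
  ==> has (perm_eq [:: d %/ a; d %/ b; d %/ c; d %/ e; d %/ f]) list_n4)
  (ds d)) (ds d)) (ds d)) (ds d)) (ds d)) (iota 1 34).
Lemma chk4T : chk4. Proof. vm_compute. reflexivity. Qed.

Definition chk3 := all (fun d => all (fun a => all (fun b => all (fun c => all (fun e =>
  [&& coprime a b, coprime a c, coprime a e, coprime b c, coprime b e,
      coprime c e & d < a + b + c + e]
  ==> has (perm_eq [:: d %/ a; d %/ b; d %/ c; d %/ e]) list_n3)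
  (ds d)) (ds d)) (ds d)) (ds d)) (iota 1 34).
Lemma chk3T : chk3. Proof. vm_compute. reflexivity. Qed.

Lemma case4 d (w : 'I_5 -> nat) : bp_data d w -> (forall i, 2 <= exponent d w i) ->
  regular w -> positive d w -> exists2 s, s \in list_n4 & perm_eq (exponents d w) s.
Proof.
move=> [d0 [wp wd]] he hr; rewrite /positive sum5 /exponents enum5 /= /exponent.
have ne : forall i j : nat, i < 5 -> j < 5 -> i != j -> (inord i : 'I_5) != inord j.
  by move=> i j hi hj hij; rewrite -val_eqE /= !inordK.
have c01 := hr _ _ (ne 0 1 isT isT isT).
have c02 := hr _ _ (ne 0 2 isT isT isT).
have c03 := hr _ _ (ne 0 3 isT isT isT).
have c04 := hr _ _ (ne 0 4 isT isT isT).
have c12 := hr _ _ (ne 1 2 isT isT isT).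
have c13 := hr _ _ (ne 1 3 isT isT isT).
have c14 := hr _ _ (ne 1 4 isT isT isT).
have c23 := hr _ _ (ne 2 3 isT isT isT).
have c24 := hr _ _ (ne 2 4 isT isT isT).
have c34 := hr _ _ (ne 3 4 isT isT isT).
have d0' := wd (inord 0); have d1 := wd (inord 1); have d2 := wd (inord 2);
have d3 := wd (inord 3); have d4 := wd (inord 4).
have e0 := he (inord 0); have e1 := he (inord 1); have e2 := he (inord 2);
have e3 := he (inord 3); have e4 := he (inord 4).
rewrite /exponent in e0 e1 e2 e3 e4.
move: (w (inord 0)) (w (inord 1)) (w (inord 2)) (w (inord 3)) (w (inord 4)) c01 c02 c03 c04 c12 c13 c14 c23 c24 c34
  d0' d1 d2 d3 d4 e0 e1 e2 e3 e4 => a b c e f c01 c02 c03 c04 c12 c13 c14 c23 c24 c34 da db dc de df ea eb ec ee ef hs.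
have p01 := pairb d0 da db c01. have p02 := pairb d0 da dc c02.
have p03 := pairb d0 da de c03. have p04 := pairb d0 da df c04.
have p12 := pairb d0 db dc c12. have p13 := pairb d0 db de c13.
have p14 := pairb d0 db df c14. have p23 := pairb d0 dc de c23.
have p24 := pairb d0 dc df c24. have p34 := pairb d0 de df c34.
have ba : a < 2*4 by apply: (bnd (k := 4) (rest := b + c + e + f) d0 da ea); lia.
have bb : b < 2*4 by apply: (bnd (k := 4) (rest := a + c + e + f) d0 db eb); lia.
have bc : c < 2*4 by apply: (bnd (k := 4) (rest := a + b + e + f) d0 dc ec); lia.
have be : e < 2*4 by apply: (bnd (k := 4) (rest := a + b + c + f) d0 de ee); lia.
have bf : f < 2*4 by apply: (bnd (k := 4) (rest := a + b + c + e) d0 df ef); lia.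
have hd : d \in iota 1 34 by rewrite mem_iota; lia.
have := chk4T; move/allP/(_ d hd)/allP/(_ a (in_ds d0 da ea ba))/allP/(_ b (in_ds d0 db eb bb)).
move/allP/(_ c (in_ds d0 dc ec bc))/allP/(_ e (in_ds d0 de ee be))/allP/(_ f (in_ds d0 df ef bf)).
move=> /implyP H; have /hasP [s s1 s2] := H ltac:(by rewrite c01 c02 c03 c04 c12 c13 c14 c23 c24 c34 hs).
by exists s.
Qed.

Lemma case3 d (w : 'I_4 -> nat) : bp_data d w -> (forall i, 2 <= exponent d w i) ->
  regular w -> positive d w -> exists2 s, s \in list_n3 & perm_eq (exponents d w) s.
Proof.
move=> [d0 [wp wd]] he hr; rewrite /positive sum4 /exponents enum4 /= /exponent.
have ne : forall i j : nat, i < 4 -> j < 4 -> i != j -> (inord i : 'I_4) != inord j.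
  by move=> i j hi hj hij; rewrite -val_eqE /= !inordK.
have c01 := hr _ _ (ne 0 1 isT isT isT).
have c02 := hr _ _ (ne 0 2 isT isT isT).
have c03 := hr _ _ (ne 0 3 isT isT isT).
have c12 := hr _ _ (ne 1 2 isT isT isT).
have c13 := hr _ _ (ne 1 3 isT isT isT).
have c23 := hr _ _ (ne 2 3 isT isT isT).
have d0' := wd (inord 0); have d1 := wd (inord 1); have d2 := wd (inord 2);
have d3 := wd (inord 3).
have e0 := he (inord 0); have e1 := he (inord 1); have e2 := he (inord 2);
have e3 := he (inord 3).
rewrite /exponent in e0 e1 e2 e3.
move: (w (inord 0)) (w (inord 1)) (w (inord 2)) (w (inord 3)) c01 c02 c03 c12 c13 c23
  d0' d1 d2 d3 e0 e1 e2 e3 => a b c e c01 c02 c03 c12 c13 c23 da db dc de ea eb ec ee hs.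
have p01 := pairb d0 da db c01. have p02 := pairb d0 da dc c02.
have p03 := pairb d0 da de c03.
have p12 := pairb d0 db dc c12. have p13 := pairb d0 db de c13.
have p23 := pairb d0 dc de c23.
have ba : a < 2*3 by apply: (bnd (k := 3) (rest := b + c + e) d0 da ea); lia.
have bb : b < 2*3 by apply: (bnd (k := 3) (rest := a + c + e) d0 db eb); lia.
have bc : c < 2*3 by apply: (bnd (k := 3) (rest := a + b + e) d0 dc ec); lia.
have be : e < 2*3 by apply: (bnd (k := 3) (rest := a + b + c) d0 de ee); lia.
have hd : d \in iota 1 34 by rewrite mem_iota; lia.
have := chk3T; move/allP/(_ d hd)/allP/(_ a (in_ds d0 da ea ltac:(lia)))/allP/(_ b (in_ds d0 db eb ltac:(lia))).
move/allP/(_ c (in_ds d0 dc ec ltac:(lia)))/allP/(_ e (in_ds d0 de ee ltac:(lia))).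
move=> /implyP H; have /hasP [s s1 s2] := H ltac:(by rewrite c01 c02 c03 c12 c13 c23 hs).
by exists s.
Qed.

Theorem proposition3p13 (n d : nat) (w : 'I_n.+1 -> nat) :
  (n = 3 \/ n = 4) ->
  bp_data d w ->
  (forall i, 2 <= exponent d w i) ->
  regular w ->
  positive d w ->
  (n = 3 -> exists2 s, s \in list_n3 & perm_eq (exponents d w) s) /\
  (n = 4 -> exists2 s, s \in list_n4 & perm_eq (exponents d w) s).
Proof.
move=> _ hb he hr hp; split=> hn; subst n.
  exact: case3.
exact: case4.
Qed.
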